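(* Let $H$ be a complex Hilbert space and let $\mathcal{U}\subseteq Sob(H)$ be a set of sub-observables all having the same outcome space $(\Omega,\mathcal{F})$, such that: (S1) there exists an observable $Z\in\mathcal{U}$; (S2) if $A\in\mathcal{U}$ then $A'=Z-A\in\mathcal{U}$; (S3) if $A,B\in\mathcal{U}$ and $A+B\in Sob(H)$, then $A+B\in\mathcal{U}$. For $A,B\in\mathcal{U}$ write $A\perp B$ if $A+B\in Sob(H)$, and in that case set $A\oplus B=A+B$. Then $(\mathcal{U},0,Z,\oplus)$ is an effect algebra (here $0$ denotes the zero sub-observable $\Delta\mapsto 0$).
   Context: $\mathcal{L}(H)$ is the set of bounded operators on $H$; $A\le B$ means $\langle\phi,A\phi\rangle\le\langle\phi,B\phi\rangle$ for all $\phi$. An effect is $a\in\mathcal{L}(H)$ with $0\le a\le I$; $\mathcal{E}(H)$ is the set of effects. For a measurable space $(\Omega,\mathcal{F})$, a sub-observable is a map $A:\mathcal{F}\to\mathcal{E}(H)$ that is countably additive in the strong operator topology; it is an observable if moreover $A(\Omega)=I$. $Sob(H)$ denotes the set of sub-observables; sums and differences of sub-observables with the same outcome space are taken pointwise ($(A+B)(\Delta)=A(\Delta)+B(\Delta)$). An effect algebra is a tuple $(E,0,1,\oplus)$ with $\oplus$ a partial binary operation (write $a\perp b$ when $a\oplus b$ is defined) such that: (E1) if $a\perp b$ then $b\perp a$ and $a\oplus b=b\oplus a$; (E2) if $a\perp b$ and $c\perp(a\oplus b)$ then $b\perp c$, $a\perp(b\oplus c)$ and $a\oplus(b\oplus c)=(a\oplus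 b)\oplus c$; (E3) for each $a\in E$ there is a unique $a'\in E$ with $a'\perp a$ and $a\oplus a'=1$; (E4) if $a\perp 1$ then $a=0$. *)

(* Defs.v *)
From mathcomp Require Import all_boot all_algebra complex.
From mathcomp Require Import all_classical reals measure.
Import GRing.Theory Num.Theory.
Local Open Scope ring_scope.
Local Open Scope classical_set_scope.

Section HilbertDefs.
Context {R : realType} {H : lmodType R[i]}.
(* inner product: conjugate-linear in the first, linear in the second argument *)
Variable ip : H -> H -> R[i].

Definition hnorm (x : H) : R := Num.sqrt (complex.Re (ip x x)).

Definition cauchy_seq (u : nat -> H) : Prop :=
  forall e : R, 0 < e -> exists N : nat, forall m n : nat,
    (N <= m)%N -> (N <= n)%N -> hnorm (u m - u n) < e.

Definition converges_to (u : nat -> H) (l : H) : Prop :=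
  forall e : R, 0 < e -> exists N : nat, forall n : nat,
    (N <= n)%N -> hnorm (u n - l) < e.

Definition is_complex_hilbert : Prop :=
  [/\ (forall (a : R[i]) (x y z : H), ip x (a *: y + z) = a * ip x y + ip x z),
      (forall x y : H, ip y x = conjc (ip x y)),
      (forall x : H, 0 <= ip x x),
      (forall x : H, ip x x = 0 -> x = 0)
    & (forall u : nat -> H, cauchy_seq u -> exists l : H, converges_to u l)].

Definition bounded_op (T : H -> H) : Prop :=
  (forall (a : R[i]) (x y : H), T (a *: x + y) = a *: T x + T y) /\
  exists C : R, forall x : H, hnorm (T x) <= C * hnorm x.

Definition op0 : H -> H := fun _ => 0.
Definition opI : H -> H := fun x => x.

(* A <= B iff <phi, A phi> <= <phi, B phi> for all phi (order of R[i]) *)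
Definition op_le (A B : H -> H) : Prop :=
  forall phi : H, ip phi (A phi) <= ip phi (B phi).

Definition is_effect (a : H -> H) : Prop :=
  bounded_op a /\ op_le op0 a /\ op_le a opI.

Section SubObs.
Context {d : measure_display} {Omega : measurableType d}.

(* A map F -> E(H) is represented as a total
   function on subsets of Omega that is normalised to 0 outside F. *)
Definition sub_observable (A : set Omega -> H -> H) : Prop :=
  [/\ (forall D : set Omega, measurable D -> is_effect (A D)),
      (forall D : set Omega, ~ measurable D -> A D = op0) &
  (forall F : nat -> set Omega, (forall n, measurable (F n)) ->
     trivIset setT F ->
     forall phi : H,
       converges_to (fun n => \sum_(k < n) A (F k) phi) (A (\bigcup_k F k) phi))].

Definition observable (A : set Omega -> H -> H) : Prop :=
  sub_observable A /\ A setT = opI.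

Definition sob_add (A B : set Omega -> H -> H) : set Omega -> H -> H :=
  fun D x => A D x + B D x.
Definition sob_sub (A B : set Omega -> H -> H) : set Omega -> H -> H :=
  fun D x => A D x - B D x.
Definition sob0 : set Omega -> H -> H := fun _ _ => 0.

End SubObs.
End HilbertDefs.

(* Effect algebra (E, zero, one, oplus) whose carrier is the set S of a type E;
   oplus is partial: it is meaningful exactly when perp holds. *)
Definition effect_algebra_on {E : Type} (S : set E) (zero one : E)
  (perp : E -> E -> Prop) (oplus : E -> E -> E) : Prop :=
  [/\ [/\ S zero, S one &
        (forall a b, S a -> S b -> perp a b -> S (oplus a b))],
      (forall a b, S a -> S b -> perp a b -> perp b a /\ oplus a b = oplus b a),
      (forall a b c, S a -> S b -> S c -> perp a b -> perp c (oplus a b) ->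
         [/\ perp b c, perp a (oplus b c) &
             oplus a (oplus b c) = oplus (oplus a b) c]),
      (forall a, S a -> exists a', [/\ S a', perp a' a, oplus a a' = one &
         forall b, S b -> perp b a -> oplus a b = one -> b = a'])
    &
      (forall a, S a -> perp a one -> a = zero)].

(* Main.v *)
Require Import Defs.
From mathcomp Require Import all_boot all_algebra complex.
From mathcomp Require Import all_classical reals measure.
Import GRing.Theory Num.Theory mathcomp.order.order.Order.TTheory.
Local Open Scope ring_scope.
Local Open Scope classical_set_scope.
Local Open Scope complex_scope.
From mathcomp Require Import ring lra.

Section Aux.
Variables (R : realType) (H : lmodType R[i]) (ip : H -> H -> R[i]).
Hypothesis hH : is_complex_hilbert ip.

Lemma ipDr x y z : ip x (y + z) = ip x y + ip x z.
Proof. case: hH => h _ _ _ _. by have := h 1 x y z; rewrite scale1r mul1r. Qed.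

Lemma ip0r x : ip x 0 = 0.
Proof. by apply: (addrI (ip x 0)); rewrite addr0 -ipDr addr0. Qed.

Lemma ipZr a x y : ip x (a *: y) = a * ip x y.
Proof. by case: hH => h _ _ _ _; rewrite -[a *: y]addr0 h ip0r addr0. Qed.

Lemma ipNr x y : ip x (- y) = - ip x y.
Proof. by rewrite -scaleN1r ipZr mulN1r. Qed.

Lemma ipsym x y : ip y x = conjc (ip x y).
Proof. by case: hH. Qed.

Lemma cjD (a b : R[i]) : conjc (a + b) = conjc a + conjc b.
Proof. by case: a; case: b => * /=; rewrite /conjc /= opprD. Qed.
Lemma cjM (a b : R[i]) : conjc (a * b) = conjc a * conjc b.
Proof. case: a; case: b => * /=; rewrite /conjc /=; simpc; congr (_ +i* _); ring. Qed.
Lemma cjN (a : R[i]) : conjc (- a) = - conjc a.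
Proof. by case: a => * /=. Qed.
Lemma cj0 : conjc (0 : R[i]) = 0.
Proof. by rewrite /conjc /= oppr0. Qed.

Lemma ipDl x y z : ip (x + y) z = ip x z + ip y z.
Proof. by rewrite ipsym ipDr cjD -!ipsym. Qed.

Lemma ipZl a x y : ip (a *: x) y = conjc a * ip x y.
Proof. by rewrite ipsym ipZr cjM -ipsym. Qed.

Lemma ipNl x y : ip (- x) y = - ip x y.
Proof. by rewrite ipsym ipNr cjN -ipsym. Qed.

Lemma ip0l x : ip 0 x = 0.
Proof. by rewrite ipsym ip0r cj0. Qed.

Lemma ge0_real (z : R[i]) : 0 <= z -> z = (complex.Re z)%:C.
Proof. by case: z => a b; rewrite lecE /= => /andP[/eqP -> _]. Qed.

Definition nn x := complex.Re (ip x x).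

Lemma nn_ge0 x : 0 <= nn x.
Proof. by case: hH => _ _ h _ _; move: (h x); rewrite lecE => /andP[]. Qed.

Lemma ipxx x : ip x x = (nn x)%:C.
Proof. by case: hH => _ _ h _ _; apply: ge0_real. Qed.

Lemma nn0 x : nn x = 0 -> x = 0.
Proof. by case: hH => _ _ _ h _ => e; apply: h; rewrite ipxx e. Qed.

Lemma ReM_real (t : R) (z : R[i]) : complex.Re (t%:C * z) = t * complex.Re z.
Proof. by case: z => a b /=; rewrite mul0r subr0. Qed.

Lemma ReJ (z : R[i]) : complex.Re (conjc z) = complex.Re z.
Proof. by case: z. Qed.

Lemma nn_comb x y (t : R) :
  nn (x + t%:C *: y) = nn x + 2 * t * complex.Re (ip x y) + t ^+ 2 * nn y.
Proof.
rewrite /nn ipDl !ipDr !ipZl !ipZr conjc_real (ipsym x y).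
move: (ip x y) (ip x x) (ip y y) => [a b] [c e] [f g] /=; ring.
Qed.

Lemma cs x y : complex.Re (ip x y) ^+ 2 <= nn x * nn y.
Proof.
set b := complex.Re (ip x y).
have := nn_ge0 y; rewrite le_eqVlt => /orP[/eqP C0|Cp].
  have y0 : y = 0 by apply: nn0.
  by rewrite /b y0 ip0r (_ : complex.Re 0 = 0) // expr0n /= mulr_ge0 ?nn_ge0.
have h := nn_ge0 (x + (- b / nn y)%:C *: y); rewrite nn_comb in h.
have e : nn x + 2 * (- b / nn y) * b + (- b / nn y) ^+ 2 * nn y
   = nn x - b ^+ 2 / nn y.
  by field; rewrite gt_eqF.
rewrite e subr_ge0 ler_pdivrMr // in h.
Qed.

Lemma hn_ge0 x : 0 <= hnorm ip x.
Proof. exact: sqrtr_ge0. Qed.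

Lemma hn_sqr x : hnorm ip x ^+ 2 = nn x.
Proof. by rewrite /hnorm sqr_sqrtr // nn_ge0. Qed.

Lemma Re_ip_le x y : `|complex.Re (ip x y)| <= hnorm ip x * hnorm ip y.
Proof.
rewrite -sqrtr_sqr /hnorm -sqrtrM; last exact: nn_ge0.
exact: ler_wsqrtr (cs x y).
Qed.

Lemma hn_tri x y : hnorm ip (x + y) <= hnorm ip x + hnorm ip y.
Proof.
have e : nn (x + y) = nn x + 2 * complex.Re (ip x y) + nn y.
  by have := nn_comb x y 1; rewrite (_ : 1%:C = 1) // scale1r mulr1 expr1n mul1r.
rewrite -[hnorm ip x + hnorm ip y]ger0_norm ?addr_ge0 ?hn_ge0 // -sqrtr_sqr.
rewrite {1}/hnorm -/(nn (x + y)) e; apply: ler_wsqrtr.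
rewrite sqrrD !hn_sqr lerD2r lerD2l -[X in _ <= X]mulr_natl ler_pM2l //.
exact: le_trans (ler_norm _) (Re_ip_le x y).
Qed.

Lemma hnN x : hnorm ip (- x) = hnorm ip x.
Proof. by rewrite /hnorm ipNl ipNr opprK. Qed.

Lemma hn0 x : hnorm ip x = 0 -> x = 0.
Proof. by move=> h; apply: nn0; rewrite -hn_sqr h expr0n. Qed.

Lemma conv_add (u v : nat -> H) l m : converges_to ip u l -> converges_to ip v m ->
  converges_to ip (fun n => u n + v n) (l + m).
Proof.
move=> hu hv e e0.
have e2 : 0 < e / 2 by rewrite divr_gt0.
have [N1 h1] := hu _ e2; have [N2 h2] := hv _ e2.
exists (maxn N1 N2) => n hn.
have hn1 : (N1 <= n)%N by rewrite (leq_trans (leq_maxl _ _) hn).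
have hn2 : (N2 <= n)%N by rewrite (leq_trans (leq_maxr _ _) hn).
rewrite opprD addrACA (le_lt_trans (hn_tri _ _)) //.
by rewrite [e](splitr e) ltrD // ?h1 ?h2.
Qed.

Lemma polar (A : H -> H) : bounded_op ip A -> (forall phi, ip phi (A phi) = 0) ->
  forall y, A y = 0.
Proof.
move=> [lin _] q y.
have AD u v : A (u + v) = A u + A v by have := lin 1 u v; rewrite !scale1r.
have A0 : A 0 = 0 by apply: (addrI (A 0)); rewrite -AD !addr0.
have AZ c u : A (c *: u) = c *: A u by have := lin c u 0; rewrite !addr0 A0 addr0.
have P u v : ip u (A v) + ip v (A u) = 0.
  by have := q (u + v); rewrite AD !ipDl !ipDr !q add0r addr0.
have P1 := P (A y) y.
have P2 := P ('i *: A y) y.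
rewrite ipZl AZ ipZr in P2.
set p := ip (A y) (A y) in P1 P2; set s := ip y (A (A y)) in P1 P2.
have cI : conjc 'i = - 'i :> R[i] by apply/eqP; rewrite eq_complex /= oppr0 !eqxx.
have s_eq : s = - p by apply/eqP; rewrite -addr_eq0 addrC P1.
rewrite cI s_eq in P2.
have e2 : ('i * p) *+ 2 = 0.
  apply/eqP; rewrite -oppr_eq0; apply/eqP; rewrite -P2; ring.
have p0 : p = 0.
  move/eqP: e2; rewrite mulrn_eq0 /= mulf_eq0 => /orP[/eqP|/eqP //].
  by move=> /(congr1 (@complex.Im R)) /=; move/eqP; rewrite oner_eq0.
by case: hH => _ _ _ hd _; apply: hd.
Qed.

Lemma eff_ge0 (a : H -> H) : is_effect ip a -> forall phi, 0 <= ip phi (a phi).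
Proof. by move=> [_ [h _]] phi; have := h phi; rewrite /op0 ip0r. Qed.

Section Sob.
Variables (d : measure_display) (Omega : measurableType d).

Lemma sob_add_sub (b c : set Omega -> H -> H) :
  sub_observable ip b -> sub_observable ip c ->
  (forall D, measurable D -> op_le ip (sob_add b c D) opI) ->
  sub_observable ip (sob_add b c).
Proof.
move=> [eb nb cb] [ec nc cc] hle; split.
- move=> D mD.
  have [[lb [Cb hb]] _] := eb D mD; have [[lc [Cc hc]] _] := ec D mD.
  split; [split|split].
  + by move=> a x y; rewrite /sob_add lb lc scalerDr addrACA.
  + exists (Cb + Cc) => x; rewrite /sob_add mulrDl.
    by apply: le_trans (hn_tri _ _) _; apply: lerD.
  + move=> phi; rewrite /op0 ip0r /sob_add ipDr addr_ge0 //; [exact: (eff_ge0 _ (eb D mD))|exact: (eff_ge0 _ (ec D mD))].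
  + exact: hle.
- by move=> D nD; apply: funext => x; rewrite /sob_add nb // nc // /op0 addr0.
- move=> F mF tF phi; rewrite /sob_add.
  have -> : (fun n => \sum_(k < n) (b (F k) phi + c (F k) phi)) =
     (fun n => \sum_(k < n) b (F k) phi + \sum_(k < n) c (F k) phi).
    by apply: funext => n; rewrite big_split.
  exact: conv_add (cb F mF tF phi) (cc F mF tF phi).
Qed.


Lemma ip_sum x n (f : nat -> H) : ip x (\sum_(k < n) f k) = \sum_(k < n) ip x (f k).
Proof.
elim: n => [|n IH]; first by rewrite !big_ord0 ip0r.
by rewrite !big_ord_recr /= ipDr IH.
Qed.

Lemma ReD (u v : R[i]) : complex.Re (u + v) = complex.Re u + complex.Re v.
Proof. by case: u; case: v. Qed.

Lemma ReN (u : R[i]) : complex.Re (- u) = - complex.Re u.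
Proof. by case: u. Qed.

Lemma e4 (a Z : set Omega -> H -> H) : sub_observable ip a ->
  sub_observable ip (sob_add a Z) -> observable ip Z -> a = sob0.
Proof.
move=> [ea na ca] [eaZ _ _] [_ ZT].
have qT phi : ip phi (a setT phi) = 0.
  apply/eqP; rewrite eq_le; apply/andP; split; last exact: (eff_ge0 _ (ea _ measurableT)).
  have [_ [_ h]] := eaZ _ measurableT; have := h phi.
  by rewrite /sob_add ZT /opI ipDr -{2}[ip phi phi]add0r lerD2r.
have qD D : measurable D -> forall phi, ip phi (a D phi) = 0.
  move=> mD phi.
  have z0 := eff_ge0 _ (ea _ mD) phi.
  have zE := ge0_real _ z0.
  set r := complex.Re (ip phi (a D phi)) in zE.
  rewrite zE ler0c in z0; rewrite zE.
  suff nr : ~ (0 < r).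
    have -> : r = 0 by apply/eqP; rewrite eq_le leNgt z0 andbT; apply/negP.
    by [].
  move=> rpos.
  pose F := fun n : nat => if n is 0 then D else if n is 1 then ~` D else set0.
  have mF n : measurable (F n).
    by case: n => [|[|n]] /=; [exact: mD | exact: measurableC | exact: measurable0].
  have tF : trivIset setT F.
    move=> i j _ _ [w [Fi Fj]].
    by case: i Fi => [|[|i]] //= Fi; case: j Fj => [|[|j]] //= Fj.
  have UF : \bigcup_k F k = setT.
    apply/seteqP; split => w // _.
    by case: (pselect (D w)) => h; [exists 0%N | exists 1%N].
  have cv := ca F mF tF phi; rewrite UF in cv.
  set h := hnorm ip phi.
  have h1 : 0 < h + 1 by rewrite ltr_wpDl ?hn_ge0.
  have e0 : 0 < r / (h + 1) by rewrite divr_gt0.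
  have [N hN] := cv _ e0.
  have := hN N.+1 (leqnSn N).
  set S := \sum_(k < N.+1) _.
  move=> hS.
  have w0 : 0 <= ip phi S - ip phi (a D phi).
    rewrite /S (ip_sum _ _ (fun k => a (F k) phi)) big_ord_recl addrC addKr.
    by apply: sumr_ge0 => k _; exact: (eff_ge0 _ (ea _ (mF k.+1))).
  have : r <= `|complex.Re (ip phi (S - a setT phi))|.
    rewrite ipDr ipNr qT oppr0 addr0.
    apply: le_trans (ler_norm _).
    rewrite -(subrK (ip phi (a D phi)) (ip phi S)) ReD -/r lerDr.
    by move: w0; rewrite lecE => /andP[].
  move=> /le_trans /(_ (Re_ip_le _ _)) hr.
  have : h * hnorm ip (S - a setT phi) < r.
    apply: le_lt_trans (_ : h * (r / (h + 1)) < r).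
      by apply: ler_wpM2l; [exact: hn_ge0 | exact: ltW].
    rewrite -{2}[r](@divfK _ (h + 1)) ?gt_eqF // mulrC ltr_pM2l //.
    by rewrite ltrDl.
  by rewrite ltNge hr.
apply: funext => D; apply: funext => x.
case: (pselect (measurable D)) => mD.
  have [bo _] := ea D mD.
  by rewrite /sob0; exact: (polar _ bo (qD D mD)).
by rewrite na.
Qed.

End Sob.
End Aux.

Theorem theorem3p1 (R : realType) (H : lmodType R[i]) (ip : H -> H -> R[i])
  (hH : is_complex_hilbert ip)
  (d : measure_display) (Omega : measurableType d)
  (U : set (set Omega -> H -> H))
  (hU : forall A, U A -> sub_observable ip A)
  (Z : set Omega -> H -> H)
  (S1 : U Z /\ observable ip Z)
  (S2 : forall A, U A -> U (sob_sub Z A))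
  (S3 : forall A B, U A -> U B -> sub_observable ip (sob_add A B) -> U (sob_add A B)) :
  effect_algebra_on U sob0 Z
    (fun A B => sub_observable ip (sob_add A B)) (@sob_add R H d Omega).
Proof.
case: S1 => UZ obsZ.
split.
- split => //.
  + have := S2 Z UZ.
    have -> // : sob_sub Z Z = sob0.
    by apply: funext => D; apply: funext => x; rewrite /sob_sub /sob0 subrr.
- move=> a b Ua Ub p.
  have e : sob_add b a = sob_add a b.
    by apply: funext => D; apply: funext => x; rewrite /sob_add addrC.
  by rewrite e.
- move=> a b c Ua Ub Uc pab pc.
  have bc : sub_observable ip (sob_add b c).
    apply: (@sob_add_sub _ _ ip hH) => //; [exact: hU | exact: hU |].
    move=> D mD phi.
    case: pc => ec _ _; have [_ [_ h]] := ec D mD.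
    apply: le_trans (h phi).
    rewrite /sob_add !(@ipDr _ _ ip hH).
    have key : forall x y z : R[i], 0 <= y -> x + z <= z + (y + x).
      by move=> x y z hy; rewrite [X in X <= _]addrC lerD2l lerDr.
    apply: key.
    case: (hU a Ua) => ea _ _.
    exact: (@eff_ge0 _ _ ip hH _ (ea D mD)).
  split => //.
  + have -> : sob_add a (sob_add b c) = sob_add c (sob_add a b) => //.
    by apply: funext => D; apply: funext => x; rewrite /sob_add [RHS]addrC addrA.
  + by apply: funext => D; apply: funext => x; rewrite /sob_add addrA.
- move=> a Ua; exists (sob_sub Z a); split.
  + exact: S2.
  + have -> : sob_add (sob_sub Z a) a = Z; last by case: obsZ.
    by apply: funext => D; apply: funext => x; rewrite /sob_add /sob_sub subrK.
  + by apply: funext => D; apply: funext => x; rewrite /sob_add /sob_sub addrC subrK.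
  + move=> b Ub _ e.
    apply: funext => D; apply: funext => x.
    have e' : a D x + b D x = Z D x by rewrite -e.
    by rewrite /sob_sub -e' (addrC (a D x)) addrK.
- move=> a Ua p.
  exact: (@e4 _ _ ip hH _ _ a Z (hU a Ua) p obsZ).
Qed.
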